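(* Let $B$ be a finite set of closed, bounded line segments in $\mathbb{R}^2$ and let $R(B)=\{p\in\mathbb{R}^2: \text{every line through } p \text{ intersects } B\}$. Then every maximal region $C\subseteq R(B)$ is an intersection of closed halfplanes, each bounded by a line that passes through two vertices (segment endpoints) of $B$.
   Context: A region is a bounded, closed, connected subset of $\mathbb{R}^2$. For a set $P\subseteq\mathbb{R}^2$, a maximal region of $P$ is a region $R$ such that for every point $p\in R$ there is an open ball $A$ centered at $p$ with $A\cap R = A\cap P$. The vertices of $B$ are the endpoints of its segments. A line intersects $B$ if it meets at least one segment of $B$. *)

(* Defs.v *)
(* points of R^2 are pairs in R * R, R : realType,
   with the product topology (= Euclidean topology). *)
From HB Require Import structures.
From mathcomp Require Import all_boot all_order all_algebra.
From mathcomp Require Import all_classical all_reals all_analysis.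
Set Implicit Arguments. Unset Strict Implicit. Unset Printing Implicit Defensive.
Import Order.TTheory GRing.Theory Num.Theory.
Import numFieldNormedType.Exports.
Local Open Scope classical_set_scope.
Local Open Scope ring_scope.

Section Defs.
Variable R : realType.
Notation pt := (R * R)%type.

Definition segment (s : pt * pt) : set pt :=
  [set p | exists t : R, 0 <= t <= 1 /\
     p = ((1 - t) * s.1.1 + t * s.2.1, (1 - t) * s.1.2 + t * s.2.2)].

Definition on_line (u : pt) (c : R) (p : pt) : Prop :=
  u.1 * p.1 + u.2 * p.2 = c.

Definition line_meets (B : seq (pt * pt)) (u : pt) (c : R) : Prop :=
  exists2 s, s \in B & exists2 q, segment s q & on_line u c q.

Definition RB (B : seq (pt * pt)) : set pt :=
  [set p | forall (u : pt) (c : R), u != 0 -> on_line u c p -> line_meets B u c].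

Definition vertex (B : seq (pt * pt)) (v : pt) : Prop :=
  exists2 s, s \in B & (v = s.1 \/ v = s.2).

Definition oball (p : pt) (r : R) : set pt :=
  [set q | (q.1 - p.1) ^+ 2 + (q.2 - p.2) ^+ 2 < r ^+ 2].

Definition region (C : set pt) : Prop :=
  C !=set0 /\
  (exists M : R, forall p, C p -> `|p.1| <= M /\ `|p.2| <= M) /\
  closed C /\ connected C.

Definition maximal_region (P C : set pt) : Prop :=
  region C /\
  forall p, C p -> exists2 r : R, 0 < r & oball p r `&` C = oball p r `&` P.

Definition halfplane (u : pt) (c : R) : set pt :=
  [set p | u.1 * p.1 + u.2 * p.2 <= c].

Definition vertex_halfplane (B : seq (pt * pt)) (h : set pt) : Prop :=
  exists (u : pt) (c : R) (v w : pt), [/\ u != 0, h = halfplane u c,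
    vertex B v /\ vertex B w, v != w & on_line u c v /\ on_line u c w].

Definition collinear (a b c : pt) : Prop :=
  (b.1 - a.1) * (c.2 - a.2) - (b.2 - a.2) * (c.1 - a.1) = 0.

End Defs.

(* Main.v *)
Require Import Defs.
From HB Require Import structures.
From mathcomp Require Import all_boot all_order all_algebra.
From mathcomp Require Import all_classical all_reals all_analysis.
From mathcomp Require Import ring lra.
Import Order.TTheory GRing.Theory Num.Theory.
Import numFieldNormedType.Exports.
Local Open Scope classical_set_scope.
Local Open Scope ring_scope.

Section T.
Variable R : realType.
Lemma cont_fst : continuous (@fst R R).
Proof. move=> x; exact: cvg_fst. Qed.
Lemma cont_snd : continuous (@snd R R).
Proof. move=> x; exact: cvg_snd. Qed.
Lemma cont_lin (a b : R) : continuous (fun x : R*R => a * x.1 + b * x.2).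
Proof.
move=> x; apply: cvgD; apply: cvgM; first exact: cst_continuous.
  exact: cont_fst.
exact: cst_continuous. exact: cont_snd.
Qed.
Lemma open_half (u : R*R) d : open [set x : R*R | u.1*x.1+u.2*x.2 < d].
Proof.
have -> : [set x : R*R | u.1*x.1+u.2*x.2 < d] = (fun x : R*R => u.1*x.1+u.2*x.2) @^-1` [set y | y < d] by [].
apply: open_comp; last exact: open_lt.
move=> x _; exact: cont_lin.
Qed.
Lemma closed_half (u : R*R) d : closed [set x : R*R | u.1*x.1+u.2*x.2 <= d].
Proof.
have -> : [set x : R*R | u.1*x.1+u.2*x.2 <= d] = (fun x : R*R => u.1*x.1+u.2*x.2) @^-1` [set y | y <= d] by [].
apply: preimage_closed; last exact: closed_le.
move=> x _; exact: cont_lin.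
Qed.
Lemma open_oball (p : R*R) r : open (oball p r).
Proof.
have -> : oball p r = (fun x : R*R => (x.1 - p.1) * (x.1 - p.1) + (x.2 - p.2) * (x.2 - p.2)) @^-1` [set y | y < r ^+ 2].
  by rewrite /oball /preimage /= !expr2.
apply: open_comp; last exact: open_lt.
move=> x _; apply: cvgD; apply: cvgM; apply: cvgB;
  (exact: cont_fst || exact: cont_snd || exact: cst_continuous).
Qed.
Definition gam (c p : R*R) (t : R) : R*R := ((1-t)*c.1 + t * p.1, (1-t)*c.2 + t * p.2).
Lemma cont_gam c p : continuous (gam c p).
Proof.
move=> t.
apply: (@cvg_pair _ _ _ _ (nbhs ((1-t)*c.1 + t * p.1)) (nbhs ((1-t)*c.2 + t * p.2)) _ _ _ (fun t => (1-t)*c.1 + t * p.1) (fun t => (1-t)*c.2 + t * p.2)).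
  apply: cvgD; apply: cvgM; (try apply: cvgB);
   (exact: cst_continuous || exact: cvg_id).
apply: cvgD; apply: cvgM; (try apply: cvgB);
   (exact: cst_continuous || exact: cvg_id).
Qed.
Lemma conn_seg c p : connected (gam c p @` `[0, 1]).
Proof.
apply: connected_continuous_connected; first exact: segment_connected.
apply: continuous_subspaceT; exact: cont_gam.
Qed.
Lemma gam0 (c p : R*R) : gam c p 0 = c.
Proof. by rewrite /gam subr0 !mul1r !mul0r !addr0; case: c. Qed.
Lemma gam1 (c p : R*R) : gam c p 1 = p.
Proof. by rewrite /gam subrr !mul0r !mul1r !add0r; case: p. Qed.

Lemma segA (P C : set (R*R)) (c0 p : R*R) :
  C `<=` P -> closed C ->
  (forall x, C x -> exists2 r : R, 0 < r & oball x r `&` C = oball x r `&` P) ->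
  C c0 -> (forall t, 0 <= t <= 1 -> P (gam c0 p t)) -> C p.
Proof.
move=> CP clC loc Cc0 segP.
set S := gam c0 p @` `[0, 1].
have SP : S `<=` P.
  by move=> y [t /= ht <-]; apply: segP; move: ht; rewrite in_itv.
have cS := conn_seg c0 p.
have H : S `&` C = S.
  apply: cS.
  - exists c0; split => //; exists 0; first by rewrite /= in_itv /= lexx ler01.
    exact: gam0.
  - pose I := [set i : (R*R) * R | C i.1 /\ 0 < i.2 /\ oball i.1 i.2 `&` C = oball i.1 i.2 `&` P].
    exists (\bigcup_(i in I) oball i.1 i.2).
      by apply: bigcup_open => i _; exact: open_oball.
    apply/seteqP; split => y.
      move=> [Sy Cy]; split => //.
      have [r r0 e] := loc y Cy.
      exists (y, r) => //=.
      by rewrite /oball /= !subrr expr0n /= add0r exprn_gt0.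
    move=> [Sy [[x r] /= [Cx [r0 e]] oy]]; split => //.
    have : (oball x r `&` P) y by split => //; exact: SP.
    by rewrite -e => -[].
  - by exists C.
have : S p by exists 1; [rewrite /= in_itv /= lexx ler01 | exact: gam1].
by rewrite -H => -[].
Qed.

Lemma halfB (C : set (R*R)) (u : R*R) d c0 :
  connected C -> C c0 -> u.1*c0.1+u.2*c0.2 < d ->
  (forall c, C c -> u.1*c.1+u.2*c.2 != d) ->
  forall c, C c -> u.1*c.1+u.2*c.2 < d.
Proof.
move=> cC Cc0 hc0 hne.
have H : C `&` [set x : R*R | u.1*x.1+u.2*x.2 < d] = C.
  apply: cC.
  - by exists c0.
  - by exists [set x : R*R | u.1*x.1+u.2*x.2 < d]; first exact: open_half.
  - exists [set x : R*R | u.1*x.1+u.2*x.2 <= d]; first exact: closed_half.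
    apply/seteqP; split => x [Cx hx]; split => //=.
      by rewrite ltW.
    by rewrite lt_neqAle hne.
move=> c Cc; have : (C `&` [set x : R*R | u.1*x.1+u.2*x.2 < d]) c by rewrite H.
by move=> [].
Qed.
End T.
Arguments gam {R}. Arguments segA {R}. Arguments halfB {R}.
Set Implicit Arguments. Unset Strict Implicit. Unset Printing Implicit Defensive.
Section A.
Variable R : realType.
Notation pt := (R * R)%type.
Definition dot (u x : pt) : R := u.1 * x.1 + u.2 * x.2.

Lemma conv_lt (t a b k : R) : 0 <= t <= 1 -> a < k -> b < k -> (1-t)*a + t*b < k.
Proof.
move=> /andP[h1 h2] ha hb.
have [->|t1] := eqVneq t 1; first by rewrite subrr mul0r add0r mul1r.
have lt1 : t < 1 by rewrite lt_neqAle t1 h2.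
have P1 : 0 < (1 - t) * (k - a) by apply: mulr_gt0; lra.
have P2 : 0 <= t * (k - b) by apply: mulr_ge0; lra.
lra.
Qed.

Lemma conv_gt (t a b k : R) : 0 <= t <= 1 -> k < a -> k < b -> k < (1-t)*a + t*b.
Proof.
move=> ht ha hb.
have h1 : -a < -k by rewrite ltrN2.
have h2 : -b < -k by rewrite ltrN2.
have := conv_lt ht h1 h2; lra.
Qed.

Lemma dot_seg (m : pt) s q : segment s q ->
  exists t, 0 <= t <= 1 /\ dot m q = (1-t) * dot m s.1 + t * dot m s.2.
Proof. by move=> [t [ht ->]]; exists t; split => //; rewrite /dot /=; ring. Qed.

Lemma seg_pt (s : pt * pt) t : 0 <= t <= 1 ->
  segment s ((1 - t) * s.1.1 + t * s.2.1, (1 - t) * s.1.2 + t * s.2.2).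
Proof. by move=> ht; exists t. Qed.

Lemma seg_fst (s : pt * pt) : segment s s.1.
Proof.
exists 0; split; first by rewrite lexx ler01.
by rewrite subr0 !mul1r !mul0r !addr0; case: s => [[]].
Qed.

Lemma seg_snd (s : pt * pt) : segment s s.2.
Proof.
exists 1; split; first by rewrite lexx ler01.
by rewrite subrr !mul0r !mul1r !add0r; case: s => [? []].
Qed.

Definition sameside (m : pt) k (s : pt * pt) :=
  (dot m s.1 < k /\ dot m s.2 < k) \/ (k < dot m s.1 /\ k < dot m s.2).

Lemma avoid_seg (m : pt) k s :
  ~ (exists2 q, segment s q & on_line m k q) -> sameside m k s.
Proof.
move=> nq; rewrite /sameside.
have H : forall t, 0 <= t <= 1 -> (1 - t) * dot m s.1 + t * dot m s.2 != k.
  move=> t ht; apply/eqP => e; apply: nq.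
  exists ((1 - t) * s.1.1 + t * s.2.1, (1 - t) * s.1.2 + t * s.2.2).
    exact: seg_pt.
  by rewrite /on_line /= -e /dot; ring.
set a := dot m s.1; set b := dot m s.2.
have ha : a != k by have := H 0; rewrite subr0 mul1r mul0r addr0; apply; rewrite lexx ler01.
have hb : b != k by have := H 1; rewrite subrr mul0r add0r mul1r; apply; rewrite lexx ler01.
have [alt|agt] := ltP a k; have [blt|bgt] := ltP b k.
- by left.
- have bk : k < b by rewrite lt_neqAle eq_sym hb bgt.
  exfalso; have hab : 0 < b - a by lra.
  have ht : 0 <= (k - a) / (b - a) <= 1.
    apply/andP; split; first by apply: divr_ge0; lra.
    by rewrite ler_pdivrMr // mul1r; lra.
  have := H _ ht.
  have -> : (1 - (k - a) / (b - a)) * a + (k - a) / (b - a) * b = k.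
    by field; lra.
  by rewrite eqxx.
- have ak : k < a by rewrite lt_neqAle eq_sym ha agt.
  exfalso; have hab : 0 < a - b by lra.
  have ht : 0 <= (a - k) / (a - b) <= 1.
    apply/andP; split; first by apply: divr_ge0; lra.
    by rewrite ler_pdivrMr // mul1r; lra.
  have := H _ ht.
  have -> : (1 - (a - k) / (a - b)) * a + (a - k) / (a - b) * b = k.
    by field; lra.
  by rewrite eqxx.
- right; split; first by rewrite lt_neqAle eq_sym ha agt.
  by rewrite lt_neqAle eq_sym hb bgt.
Qed.

Lemma sameside_avoid (B : seq (pt * pt)) m k :
  (forall s, s \in B -> sameside m k s) -> ~ line_meets B m k.
Proof.
move=> H [s sB [q sq]]; rewrite /on_line => e.
have [t [ht eq]] := dot_seg m sq.
have : dot m q = k by exact: e.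
rewrite eq; case: (H s sB) => [[h1 h2]|[h1 h2]].
  by have := conv_lt ht h1 h2 => /[swap] ->; rewrite ltxx.
by have := conv_gt ht h1 h2 => /[swap] ->; rewrite ltxx.
Qed.

Definition VL (B : seq (pt * pt)) : seq pt := flatten [seq [:: s.1; s.2] | s <- B].

Lemma vertexP B v : vertex B v <-> v \in VL B.
Proof.
split.
  move=> [s sB hv]; apply/flatten_mapP; exists s => //.
  by case: hv => ->; rewrite !inE eqxx ?orbT.
move=> /flatten_mapP [s sB]; rewrite !inE => /orP[] /eqP ->; exists s => //; by [left|right].
Qed.

Lemma vertex_seg B v : v \in VL B -> exists2 s, s \in B & segment s v.
Proof.
move=> /vertexP [s sB [->|->]]; exists s => //; [exact: seg_fst|exact: seg_snd].
Qed.

Lemma argmax_seq (l : seq pt) (P : pt -> Prop) (f : pt -> R) :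
  (exists x, x \in l /\ P x) ->
  exists x, [/\ x \in l, P x & forall y, y \in l -> P y -> f y <= f x].
Proof.
elim: l => [|a l IH]; first by case=> x [].
move=> [x [xl Px]].
case: (pselect (exists x, x \in l /\ P x)) => [ex|nex].
  have [y [yl Py ym]] := IH ex.
  case: (pselect (P a /\ f y <= f a)) => [[Pa le]|nle].
    exists a; split => //; first by rewrite inE eqxx.
    move=> z; rewrite inE => /orP[/eqP->|zl] Pz //.
    exact: le_trans (ym _ zl Pz) le.
  exists y; split => //; first by rewrite inE yl orbT.
  move=> z; rewrite inE => /orP[/eqP->|zl] Pz; last exact: ym.
  by apply: contrapT => /negP; rewrite -ltNge => lt; apply: nle; split => //; exact: ltW.
have xa : x = a.
  move: xl; rewrite inE => /orP[/eqP //|xl]; by exfalso; apply: nex; exists x.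
subst x; exists a; split; [by rewrite inE eqxx | by [] |].
move=> z; rewrite inE => /orP[/eqP->|zl] Pz //.
by exfalso; apply: nex; exists z.
Qed.

Lemma small_delta (l : seq pt) (P : pt -> Prop) (A Bf : pt -> R) :
  (forall w, w \in l -> P w -> A w != 0) ->
  exists2 d : R, 0 < d & forall w, w \in l -> P w -> `|d * Bf w| < `|A w|.
Proof.
elim: l => [|a l IH] H.
  by exists 1 => //; rewrite ltr01.
have [d d0 hd] : exists2 d : R, 0 < d & forall w, w \in l -> P w -> `|d * Bf w| < `|A w|.
  by apply: IH => w wl; apply: H; rewrite inE wl orbT.
case: (pselect (P a)) => [Pa|nPa]; last first.
  exists d => // w; rewrite inE => /orP[/eqP->|wl] Pw; first by [].
  exact: hd.
have Aa : 0 < `|A a| by rewrite normr_gt0; apply: H => //; rewrite inE eqxx.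
set e := `|A a| / (`|Bf a| + 1).
have e0 : 0 < e by apply: divr_gt0 => //; rewrite ltr_pwDr // normr_ge0.
have he : `|e * Bf a| < `|A a|.
  rewrite normrM (gtr0_norm e0) /e mulrAC ltr_pdivrMr; last by rewrite ltr_pwDr // normr_ge0.
  by rewrite mulrDr mulr1 ltrDl.
clearbody e.
have m0 : 0 < Order.min d e by rewrite lt_min d0 e0.
have m1 : Order.min d e <= e by rewrite ge_min lexx orbT.
have m2 : Order.min d e <= d by rewrite ge_min lexx.
exists (Order.min d e) => // w; rewrite inE => /orP[/eqP->|wl] Pw.
  apply: le_lt_trans he; rewrite !normrM; apply: ler_wpM2r; first exact: normr_ge0.
  by rewrite !gtr0_norm.
apply: le_lt_trans (hd _ wl Pw); rewrite !normrM; apply: ler_wpM2r; first exact: normr_ge0.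
by rewrite !gtr0_norm.
Qed.

Lemma abs_pos (a e : R) : `|e| < `|a| -> 0 < a -> 0 < a + e.
Proof.
move=> h a0; rewrite (gtr0_norm a0) in h; have := ler_norm (- e); rewrite normrN.
move=> h2; lra.
Qed.
Lemma abs_neg (a e : R) : `|e| < `|a| -> a < 0 -> a + e < 0.
Proof.
move=> h a0; rewrite (ltr0_norm a0) in h; have := ler_norm e.
move=> h2; lra.
Qed.


Lemma sqr_pos (x : R) : x != 0 -> 0 < x * x.
Proof. by move=> h; rewrite lt0r mulf_neq0 //= -expr2 sqr_ge0. Qed.

Lemma frac01 (A B : R) : A * B < 0 -> 0 < A / (A - B) < 1.
Proof.
move=> h.
have [A0|A0] : 0 < A \/ A < 0.
  case: (ltgtP A 0) => [a|a|a]; [by right|by left|by move: h; rewrite a mul0r ltxx].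
  have B0 : B < 0 by rewrite -(pmulr_rlt0 _ A0).
  have D : 0 < A - B by lra.
  apply/andP; split; first exact: divr_gt0.
  by rewrite ltr_pdivrMr // mul1r; lra.
have B0 : 0 < B by rewrite -(nmulr_rlt0 _ A0).
have D : 0 < B - A by lra.
have -> : A / (A - B) = (- A) / (B - A) by field; rewrite !subr_eq0; apply/andP; split; apply/eqP; lra.
apply/andP; split; first by apply: divr_gt0; lra.
by rewrite ltr_pdivrMr // mul1r; lra.
Qed.

Lemma sgn_pres (A B t : R) : A != 0 -> 0 <= t -> t < 1 ->
  (A * B < 0 -> t < A / (A - B)) -> 0 < A * ((1 - t) * A + t * B).
Proof.
move=> A0 t0 t1 h.
have AA : 0 < A * A by exact: sqr_pos.
have [AB|AB] := ltP (A * B) 0.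
  have D : A - B != 0.
    apply/eqP => e; have eB : B = A by lra.
    by move: AB; rewrite eB -expr2 ltNge sqr_ge0.
  have P1 : 0 < A * (A - B) by rewrite mulrBr; lra.
  have -> : A * ((1 - t) * A + t * B) = (A * (A - B)) * (A / (A - B) - t) by field.
  apply: mulr_gt0 => //; have := h AB; lra.
have P1 : 0 < (1 - t) * (A * A) by apply: mulr_gt0 => //; lra.
have P2 : 0 <= t * (A * B) by apply: mulr_ge0.
have -> : A * ((1 - t) * A + t * B) = (1 - t) * (A * A) + t * (A * B) by ring.
lra.
Qed.

Lemma pt_eq0 (m : pt) : m = 0 -> forall x, dot m x = 0.
Proof. by move=> -> x; rewrite /dot /= !mul0r addr0. Qed.

Section Pencil.
Variables (B : seq (pt * pt)) (hseg : forall s, s \in B -> s.1 != s.2).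
Variables (C : set pt) (CR : C `<=` RB B).
Variables (u K v0 p : pt) (d : R).
Hypotheses (v0V : v0 \in VL B) (t0d : dot u v0 < d)
  (hw : forall w, w \in VL B -> w != v0 -> dot u w < dot u v0 \/ d < dot u w)
  (hs : forall s, s \in B -> sameside u d s)
  (hC : forall c, C c -> dot u c <= dot u v0)
  (hK : dot K p = dot K v0) (hp : dot u v0 < dot u p).
Let Af w := dot u w - dot u v0.
Let Bk w := dot K w - dot K v0.
Let nvec t : pt := ((1-t)*u.1 + t*K.1, (1-t)*u.2 + t*K.2).
Lemma dot_n t x : dot (nvec t) x - dot (nvec t) v0 = (1-t) * Af x + t * Bk x.
Proof. by rewrite /Af /Bk /nvec /dot /=; ring. Qed.

Lemma pencil : (exists w, w \in VL B /\ (w != v0 /\ Af w * Bk w < 0)) ->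
  exists h, [/\ vertex_halfplane B h, C `<=` h & ~ h p].
Proof.
move=> hex.
have [ws [wsV [wsne wsneg] wsmax]] := argmax_seq (fun w => - (Af w / (Af w - Bk w))) hex.
have /andP[ts0 ts1] := frac01 wsneg.
set ts := Af ws / (Af ws - Bk ws) in ts0 ts1 wsmax *.
have tsmin : forall w, w \in VL B -> w != v0 -> Af w * Bk w < 0 -> ts <= Af w / (Af w - Bk w).
  by move=> w wV wn wneg; rewrite -lerN2; exact: wsmax.
have Bkp : Bk p = 0 by rewrite /Bk hK subrr.
have Afp : 0 < Af p by rewrite /Af subr_gt0.
set m := nvec ts.
have hpm : 0 < dot m p - dot m v0.
  by rewrite dot_n Bkp mulr0 addr0; apply: mulr_gt0 => //; rewrite subr_gt0.
have m0 : m != 0.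
  apply/eqP => /pt_eq0 h; move: hpm; rewrite !h subrr ltxx //.
exists (halfplane m (dot m v0)); split.
- exists m, (dot m v0), v0, ws; split => //.
  + by split; apply/vertexP.
  + by rewrite eq_sym.
  + split => //; rewrite /on_line.
    apply/eqP; rewrite -subr_eq0; apply/eqP; rewrite -/(dot m ws) dot_n /ts.
    have : Af ws - Bk ws != 0.
      apply/eqP => e; have eAB : Af ws = Bk ws by lra.
      by move: wsneg; rewrite eAB -expr2 ltNge sqr_ge0.
    by move=> hne; field.
- move=> c Cc; change (dot m c <= dot m v0).
  rewrite leNgt; apply/negP => gt.
  have g : 0 < (1 - ts) * Af c + ts * Bk c by rewrite -dot_n; lra.
  have hAc : Af c <= 0 by rewrite /Af; have := hC Cc; lra.
  have [tc [tc0 tcts tcz]] : exists tc, [/\ 0 <= tc, tc < ts & (1 - tc) * Af c + tc * Bk c = 0].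
    have [A0|A0] := eqVneq (Af c) 0.
      exists 0; split => //; rewrite A0; ring.
    have An : Af c < 0 by rewrite lt_neqAle A0 hAc.
    have Bp : 0 < Bk c.
      have P1 : (1 - ts) * Af c < 0 by rewrite pmulr_rlt0 //; lra.
      have P2 : 0 < ts * Bk c by lra.
      by rewrite -(pmulr_rgt0 _ ts0).
    have D : 0 < Bk c - Af c by lra.
    exists (Af c / (Af c - Bk c)); split.
    + have -> : Af c / (Af c - Bk c) = (- Af c) / (Bk c - Af c) by field; rewrite !subr_eq0; apply/andP; split; apply/eqP; lra.
      apply: divr_ge0; lra.
    + rewrite -subr_gt0.
      have -> : ts - Af c / (Af c - Bk c) = ((1 - ts) * Af c + ts * Bk c) / (Bk c - Af c).
        by field; rewrite ?subr_eq0; (try apply/andP; try split); apply/eqP; lra.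
      exact: divr_gt0.
    + by field; rewrite ?subr_eq0; (try apply/andP; try split); apply/eqP; lra.
  have tc1 : tc < 1 by lra.
  set mc := nvec tc.
  have hmc : dot mc c = dot mc v0.
    by apply/eqP; rewrite -subr_eq0; apply/eqP; rewrite dot_n.
  have sgn : forall w, w \in VL B -> w != v0 -> 0 < Af w * (dot mc w - dot mc v0).
    move=> w wV wn; rewrite dot_n; apply: sgn_pres => //.
    + rewrite /Af /=; apply/eqP => e; have e2 := subr0_eq e; case: (hw wV wn); rewrite e2 ?ltxx // => h; by move: (lt_trans t0d h); rewrite ltxx.
    + move=> neg; apply: lt_le_trans tcts _; exact: tsmin.
  set Q1 := c.1 - v0.1; set Q2 := c.2 - v0.2.
  have q2 : 0 < Q1 * Q1 + Q2 * Q2.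
    have [e1|n1] := eqVneq Q1 0.
      have [e2|n2] := eqVneq Q2 0.
        exfalso; have : dot m c - dot m v0 = m.1 * Q1 + m.2 * Q2 by rewrite /dot /Q1 /Q2; ring.
        by rewrite e1 e2 !mulr0 addr0 => /subr0_eq h; move: gt; rewrite h ltxx.
      rewrite e1 mul0r add0r; exact: sqr_pos.
    have := sqr_pos n1 => h1; have := sqr_ge0 Q2; rewrite expr2 => h2; lra.
  have nz : forall w, w \in VL B -> w != v0 -> dot mc w - dot mc v0 != 0.
    by move=> w wV wn; apply/eqP => e; have := sgn w wV wn; rewrite e mulr0 ltxx.
  have [del del0 hdel] := @small_delta (VL B) (fun w => w != v0)
     (fun w => dot mc w - dot mc v0) (fun w => Q1 * (w.1 - c.1) + Q2 * (w.2 - c.2)) nz.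
  pose m' : pt := (mc.1 + del * Q1, mc.2 + del * Q2).
  have dm' : forall x, dot m' x - dot m' c = (dot mc x - dot mc v0) + del * (Q1 * (x.1 - c.1) + Q2 * (x.2 - c.2)).
    by move=> x; rewrite -hmc /m' /dot /=; ring.
  have hv0 : dot m' v0 - dot m' c < 0.
    rewrite dm' subrr add0r.
    have -> : Q1 * (v0.1 - c.1) + Q2 * (v0.2 - c.2) = - (Q1 * Q1 + Q2 * Q2) by rewrite /Q1 /Q2; ring.
    by rewrite mulrN oppr_lt0; exact: mulr_gt0.
  have m'0 : m' != 0.
    by apply/eqP => /pt_eq0 h; move: hv0; rewrite !h subrr ltxx.
  have side : forall e, e \in VL B ->
      (dot u e < d -> dot m' e < dot m' c) /\ (d < dot u e -> dot m' c < dot m' e).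
    move=> e eV; have [->|en] := eqVneq e v0.
      split => h; first by rewrite -subr_lt0.
      by move: (lt_trans t0d h); rewrite ltxx.
    have se := sgn e eV en; have hd := hdel e eV en.
    split => h.
      have Ae : Af e < 0.
        rewrite /Af /= subr_lt0; case: (hw eV en) => // h'.
        by move: (lt_trans h h'); rewrite ltxx.
      have Ne : dot mc e - dot mc v0 < 0 by rewrite -(nmulr_rgt0 _ Ae).
      by rewrite -subr_lt0 dm'; exact: abs_neg hd Ne.
    have Ae : 0 < Af e by rewrite /Af /= subr_gt0; exact: lt_trans t0d h.
    have Ne : 0 < dot mc e - dot mc v0 by rewrite -(pmulr_rgt0 _ Ae).
    by rewrite -subr_gt0 dm'; exact: abs_pos hd Ne.
  apply: (@sameside_avoid B m' (dot m' c)) (CR Cc m'0 _) => //.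
  move=> s sB.
  have s1V : s.1 \in VL B by apply/vertexP; exists s => //; left.
  have s2V : s.2 \in VL B by apply/vertexP; exists s => //; right.
  case: (hs sB) => [[h1 h2]|[h1 h2]]; [left|right]; split.
  + exact: (side _ s1V).1.
  + exact: (side _ s2V).1.
  + exact: (side _ s1V).2.
  + exact: (side _ s2V).2.
- move=> h; have := hpm; rewrite subr_gt0 ltNge => /negP; apply; exact: h.
Qed.
End Pencil.

Lemma collinear_of_line (N a b c : pt) k : (N.1 != 0 \/ N.2 != 0) ->
  dot N a = k -> dot N b = k -> dot N c = k -> collinear a b c.
Proof.
move=> hN ha hb hc; rewrite /collinear.
set X := _ - _.
have e1 : dot N b - dot N a = 0 by rewrite ha hb subrr.
have e2 : dot N c - dot N a = 0 by rewrite ha hc subrr.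
have h1 : N.1 * X = (c.2 - a.2) * (dot N b - dot N a) - (b.2 - a.2) * (dot N c - dot N a).
  by rewrite /X /dot; ring.
have h2 : N.2 * X = - (c.1 - a.1) * (dot N b - dot N a) + (b.1 - a.1) * (dot N c - dot N a).
  by rewrite /X /dot; ring.
rewrite e1 e2 !mulr0 subrr in h1; rewrite e1 e2 !mulr0 addr0 in h2.
case: hN => hN.
  by move/eqP: h1; rewrite mulf_eq0 (negbTE hN) => /eqP.
by move/eqP: h2; rewrite mulf_eq0 (negbTE hN) => /eqP.
Qed.

Lemma core (B : seq (pt * pt)) (hseg : forall s, s \in B -> s.1 != s.2)
  (hnc : exists a b c, [/\ vertex B a, vertex B b, vertex B c & ~ collinear a b c])
  (C : set pt) (CR : C `<=` RB B) (c0 : pt) (Cc0 : C c0) (u : pt) (d : R) (p : pt)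
  (u0 : u != 0) (nl : ~ line_meets B u d) (hCd : forall c, C c -> dot u c < d)
  (hpd : d <= dot u p) :
  exists h, [/\ vertex_halfplane B h, C `<=` h & ~ h p].
Proof.
have hs : forall s, s \in B -> sameside u d s.
  by move=> s sB; apply: avoid_seg => ex; apply: nl; exists s.
have exL : exists x, x \in VL B /\ dot u x < d.
  have [s sB [q sq hq]] := CR _ Cc0 u (dot u c0) u0 (erefl _).
  have [t [ht eq]] := dot_seg u sq.
  have hq' : dot u q = dot u c0 by exact: hq.
  case: (hs s sB) => [[h1 h2]|[h1 h2]].
    by exists s.1; split => //; apply/vertexP; exists s => //; left.
  have := conv_gt ht h1 h2; rewrite -eq hq' => h.
  by have := lt_trans h (hCd _ Cc0); rewrite ltxx.
have [v0 [v0V v0d v0max]] := argmax_seq (fun w => dot u w) exL.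
have hvd : forall w, w \in VL B -> dot u w != d.
  move=> w wV; apply/eqP => e; have [s sB sw] := vertex_seg wV.
  by apply: nl; exists s => //; exists w.
have hw0 : forall w, w \in VL B -> dot u w <= dot u v0 \/ d < dot u w.
  move=> w wV; case: (ltP (dot u w) d) => h; first by left; exact: v0max.
  by right; rewrite lt_neqAle eq_sym hvd.
have hC : forall c, C c -> dot u c <= dot u v0.
  move=> c Cc; rewrite leNgt; apply/negP => gt.
  apply: (@sameside_avoid B u (dot u c)) (CR _ Cc u (dot u c) u0 (erefl _)) => // s sB.
  case: (hs s sB) => [[h1 h2]|[h1 h2]]; [left|right]; split.
  + by apply: le_lt_trans gt; apply: v0max => //; apply/vertexP; exists s => //; left.
  + by apply: le_lt_trans gt; apply: v0max => //; apply/vertexP; exists s => //; right.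
  + exact: lt_trans (hCd _ Cc) h1.
  + exact: lt_trans (hCd _ Cc) h2.
have hp : dot u v0 < dot u p by exact: lt_le_trans v0d hpd.
case: (pselect (exists w, w \in VL B /\ w != v0 /\ dot u w = dot u v0)) => [[w [wV [wn we]]]|nex].
  exists (halfplane u (dot u v0)); split.
  - exists u, (dot u v0), v0, w; split => //.
    + by split; apply/vertexP.
    + by rewrite eq_sym.
  - exact: hC.
  - by move=> h; have := le_lt_trans h hp; rewrite ltxx.
have hw : forall w, w \in VL B -> w != v0 -> dot u w < dot u v0 \/ d < dot u w.
  move=> w wV wn; case: (hw0 w wV) => h; last by right.
  left; rewrite lt_neqAle h andbT; apply/eqP => e; apply: nex; exists w; split => //.
pose P1 := p.1 - v0.1; pose P2 := p.2 - v0.2.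
pose Kp : pt := (- P2, P1); pose Km : pt := (P2, - P1).
have hKp : dot Kp p = dot Kp v0 by rewrite /Kp /dot /P1 /P2 /=; ring.
have hKm : dot Km p = dot Km v0 by rewrite /Km /dot /P1 /P2 /=; ring.
case: (pselect (exists w, w \in VL B /\ (w != v0 /\ (dot u w - dot u v0) * (dot Kp w - dot Kp v0) < 0))) => [ex|nexp].
  exact: (pencil CR v0V v0d hw hs hC hKp hp ex).
case: (pselect (exists w, w \in VL B /\ (w != v0 /\ (dot u w - dot u v0) * (dot Km w - dot Km v0) < 0))) => [ex|nexm].
  exact: (pencil CR v0V v0d hw hs hC hKm hp ex).
exfalso.
have allK : forall w, w \in VL B -> dot Kp w = dot Kp v0.
  move=> w wV; have [->//|wn] := eqVneq w v0.
  have Aw : dot u w - dot u v0 != 0.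
    apply/eqP => e; have e2 := subr0_eq e.
    by case: (hw w wV wn); rewrite e2 ?ltxx // => h; move: (lt_trans v0d h); rewrite ltxx.
  have g1 : 0 <= (dot u w - dot u v0) * (dot Kp w - dot Kp v0).
    by rewrite leNgt; apply/negP => h; apply: nexp; exists w.
  have g2 : 0 <= (dot u w - dot u v0) * (dot Km w - dot Km v0).
    by rewrite leNgt; apply/negP => h; apply: nexm; exists w.
  have eKm : dot Km w - dot Km v0 = - (dot Kp w - dot Kp v0) by rewrite /Km /Kp /dot /=; ring.
  rewrite eKm mulrN oppr_ge0 in g2.
  have : (dot u w - dot u v0) * (dot Kp w - dot Kp v0) = 0 by apply/eqP; rewrite eq_le g2 g1.
  by move/eqP; rewrite mulf_eq0 (negbTE Aw) => /eqP /subr0_eq.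
have KpN : Kp.1 != 0 \/ Kp.2 != 0.
  case: (eqVneq P1 0) => h1; last by right.
  case: (eqVneq P2 0) => h2; last by left; rewrite /Kp /= oppr_eq0.
  exfalso; have : dot u p - dot u v0 = u.1 * P1 + u.2 * P2 by rewrite /P1 /P2 /dot; ring.
  rewrite h1 h2 !mulr0 addr0 => /subr0_eq e; move: hp; rewrite e ltxx //.
have [a [b [c [va vb vc nc]]]] := hnc.
apply: nc; apply: (@collinear_of_line Kp a b c (dot Kp v0) KpN); apply: allK; exact/vertexP.
Qed.
End A.

Theorem theorem1 (R : realType) (B : seq ((R * R) * (R * R)))
  (hseg : forall s, s \in B -> s.1 != s.2)
  (hnc : exists a b c, [/\ vertex B a, vertex B b, vertex B c & ~ collinear a b c])
  (C : set (R * R)) (hC : maximal_region (RB B) C) :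
  exists H : set (set (R * R)),
    (forall h, H h -> vertex_halfplane B h) /\ C = \bigcap_(h in H) h.
Proof.
move: hC => [[[c0 Cc0] [_ [clC cC]]] loc].
have CR : C `<=` RB B.
  move=> x Cx; have [r r0 e] := loc x Cx.
  have : (oball x r `&` C) x.
    by split => //; rewrite /oball /= !subrr expr0n /= add0r exprn_gt0.
  by rewrite e => -[].
exists [set h | vertex_halfplane B h /\ C `<=` h]; split; first by move=> h [].
apply/seteqP; split.
  by move=> x Cx h [_ Ch]; exact: Ch.
move=> p Hp; apply: contrapT => nCp.
have : ~ (forall t, 0 <= t <= 1 -> RB B (gam c0 p t)).
  by move=> all; apply: nCp; exact: (@segA _ (RB B) C c0 p CR clC loc Cc0 all).
move=> /existsNP [t] /not_implyP [ht nRB].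
have [u [d [u0 [onq nl]]]] : exists u d, [/\ u != 0, on_line u d (gam c0 p t) & ~ line_meets B u d].
  move: nRB => /existsNP [u] /existsNP [d] /not_implyP [u0] /not_implyP [onq nl].
  by exists u, d.
have hq : forall (u : R * R) d, u != 0 -> ~ line_meets B u d -> on_line u d (gam c0 p t) ->
    dot u c0 < d -> exists h, [/\ vertex_halfplane B h, C `<=` h & ~ h p].
  move=> {}u {}d {}u0 {}nl {}onq lt.
  have hne : forall c, C c -> u.1 * c.1 + u.2 * c.2 != d.
    by move=> c Cc; apply/eqP => e; apply: nl; exact: (CR _ Cc u d u0 e).
  have hCd : forall c, C c -> dot u c < d by exact: (halfB C u d c0 cC Cc0 lt hne).
  apply: (core hseg hnc CR Cc0 u0 nl hCd).
  rewrite leNgt; apply/negP => ltp.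
  have e : dot u (gam c0 p t) = (1 - t) * dot u c0 + t * dot u p by rewrite /gam /dot /=; ring.
  have := conv_lt ht lt ltp; rewrite -e.
  have -> : dot u (gam c0 p t) = d by exact: onq.
  by rewrite ltxx.
have [h [vh Ch nhp]] : exists h, [/\ vertex_halfplane B h, C `<=` h & ~ h p].
  have : dot u c0 != d by apply/eqP => e; apply: nl; exact: (CR _ Cc0 u d u0 e).
  case: ltgtP => // [lt|gt] _; first exact: hq u d u0 nl onq lt.
  pose u' : R * R := (- u.1, - u.2).
  apply: (hq u' (- d)).
  - apply/eqP => e; move/eqP: u0; apply.
    have e1 : - u.1 = 0 by have := congr1 fst e.
    have e2 : - u.2 = 0 by have := congr1 snd e.
    rewrite (surjective_pairing u).
    move/eqP: e1; rewrite oppr_eq0 => /eqP ->.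
    by move/eqP: e2; rewrite oppr_eq0 => /eqP ->.
  - move=> [s sB [q sq oq]]; apply: nl; exists s => //; exists q => //.
    by move: oq; rewrite /on_line /u' /= => e; apply/eqP; rewrite -eqr_opp -e; apply/eqP; ring.
  - by move: onq; rewrite /on_line /u' /= => e; rewrite -e; ring.
  - have -> : dot u' c0 = - dot u c0 by rewrite /dot /u' /=; ring.
    by rewrite ltrN2.
by apply: nhp; apply: Hp.
Qed.
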